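(* Let $q\ge 2$ be a prime power. For all $x,y\in\mathbb{F}_q$, any two distinct vertices of $\{(x,y,j)_0: j\in\mathbb{F}_q\}$ are at distance at least $6$ in $B_q$.
   Context: $\mathbb{F}_q$ is the field with $q$ elements. $B_q$ is the bipartite graph with parts $\{(x,y,z)_0: x,y,z\in\mathbb{F}_q\}$ and $\{(a,b,c)_1: a,b,c\in\mathbb{F}_q\}$, in which $(a,b,c)_1$ is adjacent exactly to $(j,\,aj+b,\,a^2j+2ab+c)_0$, $j\in\mathbb{F}_q$. *)

(* Defs.v *)
From HB Require Import structures.
From mathcomp Require Import all_boot all_order all_algebra all_field.
Set Implicit Arguments. Unset Strict Implicit. Unset Printing Implicit Defensive.
Import GRing.Theory.
Local Open Scope ring_scope.

(* Vertices of B_q over a finite field F (|F| = q):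
   inl (x,y,z) = point (x,y,z)_0 ; inr (a,b,c) = line (a,b,c)_1. *)
Definition vertex (F : finFieldType) : finType :=
  ((F * F * F) + (F * F * F))%type.

Definition incident (F : finFieldType) (l p : F * F * F) : bool :=
  let: (a, b, c) := l in
  let: (x, y, z) := p in
  (y == a * x + b) && (z == a ^+ 2 * x + 2%:R * a * b + c).

Definition Badj (F : finFieldType) : rel (vertex F) :=
  fun u v =>
    match u, v with
    | inl p, inr l => incident l p
    | inr l, inl p => incident l p
    | _, _ => false
    end.

(* dist(u,v) >= n in B_q: every walk from u to v has length >= n.
   A walk u = v_0, v_1, ..., v_k = v is given by s = [:: v_1; ...; v_k]. *)
Definition dist_ge (F : finFieldType) (n : nat) (u v : vertex F) : Prop :=
  forall s : seq (vertex F), path (@Badj F) u s -> last u s = v -> (n <= size s)%N.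

(* Main.v *)
Require Import Defs.
From HB Require Import structures.
From mathcomp Require Import all_boot all_order all_algebra all_field.
From mathcomp Require Import ring.
Import GRing.Theory.
Local Open Scope ring_scope.

Lemma L2 (F : finFieldType) (l : F * F * F) (x y j1 j2 : F) :
  incident l (x, y, j1) -> incident l (x, y, j2) -> j1 = j2.
Proof.
case: l => [[a b] c] /= /andP [_ /eqP ->] /andP [_ /eqP ->] //.
Qed.

Lemma L4 (F : finFieldType) (l1 l2 p : F * F * F) (x y j1 j2 : F) :
  incident l1 (x, y, j1) -> incident l1 p -> incident l2 p ->
  incident l2 (x, y, j2) -> j1 = j2.
Proof.
case: l1 => [[a b] c]; case: l2 => [[a' b'] c']; case: p => [[u v] w] /=.
move=> /andP [/eqP E1 /eqP E2] /andP [/eqP E3 /eqP E4]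
       /andP [/eqP E5 /eqP E6] /andP [/eqP E7 /eqP E8].
have Hb : b = y - a * x by rewrite E1; ring.
have Hb' : b' = y - a' * x by rewrite E7; ring.
have H1 : j1 = w + a ^+ 2 * (x - u) by rewrite E2 E4; ring.
have H2 : j2 = w + a' ^+ 2 * (x - u) by rewrite E8 E6; ring.
have H3 : (a - a') * (u - x) = 0.
  have E : a * u + b = a' * u + b' by rewrite -E3 -E5.
  have -> : (a - a') * (u - x) = (a * u + b) - (a' * u + b') by rewrite Hb Hb'; ring.
  by rewrite E subrr.
move/eqP: H3; rewrite mulf_eq0 => /orP [|] /eqP H.
  by rewrite H1 H2 (subr0_eq H).
by rewrite H1 H2 (subr0_eq H) !subrr !mulr0.
Qed.

Theorem claim2 (F : finFieldType) (x y j1 j2 : F) :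
  j1 != j2 ->
  dist_ge 6 (inl (x, y, j1) : vertex F) (inl (x, y, j2)).
Proof.
move=> hj s Hp Hl; rewrite leqNgt; apply/negP => Hs.
case: s Hp Hl Hs => [|v1 [|v2 [|v3 [|v4 [|v5 [|v6 s]]]]]] //=;
 try (by move=> _ [E]; rewrite E eqxx in hj);
 try (case: v1 => [?|?] //=); try (case: v2 => [?|?] //=); try (case: v3 => [?|?] //=);
 try (case: v4 => [?|?] //=); try (case: v5 => [?|?] //=);
 rewrite ?andbT ?andbF //=.
- move=> /andP [h1 h2] [E] _; subst.
  by rewrite (L2 _ _ _ _ _ _ h1 h2) eqxx in hj.
- move=> /and4P [h1 h2 h3 h4] [E] _; subst.
  by rewrite (L4 _ _ _ _ _ _ _ _ h1 h2 h3 h4) eqxx in hj.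
Qed.
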